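(* In the setting of the context, under condition (A1) the family $\{a_{v,\sigma}\}_{v\in\mathcal{V}_L^W}$ is connected: for any $v,v'\in\mathcal{V}_L^W$ there is a sequence $v=v_0,v_1,\dots,v_k=v'$ of white vertices such that for each $j$, $a_{v_{j-1},\sigma}$ and $a_{v_j,\sigma}$ are directly connected, meaning there is a vertex $u$ with $\{c^\dagger_{u,\sigma},a_{v_{j-1},\sigma}\}\ne0$ and $\{c^\dagger_{u,\sigma},a_{v_j,\sigma}\}\neq 0$.
   Context: Construction. Let $G_l=(V_l,E_l)$, $l=1,\dots,L$, be complete graphs with $|V_l|\ge 2$. In each $V_l$ one vertex $v_l^0$ is painted black, the others white. Set $\mathcal{G}_1=G_1$. For $l=2,\dots,L$: choose an integer $z_l$ with $0<z_l\le |V_l|-1$, choose $z_l$ white vertices of $V_l$ and identify each with a vertex (black or white; distinct with distinct) of $\mathcal{V}_{l-1}$; $\mathcal{V}_l=\mathcal{V}_{l-1}\cup V_l$ with these identifications and $\mathcal{E}_l=\mathcal{E}_{l-1}\cup E_l$. A white vertex identified with a black one becomes black; two identified white vertices stay white; $v_l^0$ is never identified with an earlier vertex. $\mathcal{V}_l^W$ denotes the white vertices of $\mathcal{G}_l$. Directed edges: $\vec{\mathcal{E}}_L=\bigcup_l\{(v,v_l^0):v\in V_l\setminus\{v_l^0\}\}$; directed paths (including the trivial path $(v)$), reachable set $R(v)$, number $N(v\to u)$ of directed paths from $v$ to $u$, and $|(v\to u)_j|$ the number of vertices on the $j$-th path. Condition (A1): for every $l\in\{2,\dots,L\}$ with $z_l\neq|V_l|-1$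 there exists $v\in\mathcal{V}_{l-1}^W$ with $N(v\to v_l^0)$ odd. Fermions $c_{v,\sigma}$ with canonical anticommutation relations; for white $v$, $a_{v,\sigma}=\sum_{u\in R(v)}\big(\sum_{j=1}^{N(v\to u)}(-1)^{|(v\to u)_j|-1}\big)c_{u,\sigma}$. *)

(* Defs.v *)
From mathcomp Require Import all_boot all_order all_algebra all_field.
Unset Strict Implicit. Unset Printing Implicit Defensive.
Import Order.TTheory GRing.Theory Num.Theory.
Local Open Scope ring_scope.

(* Encoding of the construction (layers indexed 0..L-1 instead of 1..L):
   - V is the final vertex set \mathcal V_L;
   - layer l is the complete graph on 'I_(k l).+2 (so |V_l| = k l + 2 >= 2),
     embedded into V by phi l; the black vertex v_l^0 is index ord0;
   - identifications are recorded by phi: a vertex of V_l is identified with an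
     earlier vertex iff its image lies in the image of an earlier layer. *)
Section Graph.
Variables (L : nat) (k : 'I_L -> nat) (V : finType)
          (phi : forall l : 'I_L, 'I_(k l).+2 -> V).
Set Implicit Arguments.

Definition in_layer (l : 'I_L) (x : V) : bool := [exists i, phi l i == x].
Definition earlier (l : 'I_L) (x : V) : bool :=
  [exists m : 'I_L, (m < l)%N && in_layer m x].
Definition black_before (l : 'I_L) (x : V) : bool :=
  [exists m : 'I_L, (m < l)%N && (phi m ord0 == x)].
Definition white (x : V) : bool := ~~ [exists l, phi l ord0 == x].
Definition z (l : 'I_L) : nat := #|[set i : 'I_(k l).+2 | earlier l (phi l i)]|.

Definition construction : Prop :=
  (forall l, injective (phi l)) /\
  (forall x, exists l, in_layer l x) /\
  (forall l : 'I_L, (0 < l)%N ->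
     [/\ (0 < z l)%N, (z l <= (k l).+1)%N & ~~ earlier l (phi l ord0)]).

Definition dedge (x y : V) : bool :=
  [exists l, exists i : 'I_(k l).+2,
     [&& i != ord0, phi l i == x & phi l ord0 == y]].

(* number of directed paths v -> u with j edges (j+1 vertices) *)
Definition npaths_len (v u : V) (j : nat) : nat :=
  #|[set s : j.-tuple V | path dedge v s && (last v s == u)]|.
(* the graph is acyclic, so every directed path has fewer than #|V| edges *)
Definition npaths (v u : V) : nat := \sum_(j < #|V|) npaths_len v u j.
Definition reach (v u : V) : bool := (0 < npaths v u)%N.
(* \sum_j (-1)^(|(v->u)_j| - 1) *)
Definition coef (v u : V) : int :=
  \sum_(j < #|V|) (-1) ^+ j * (npaths_len v u j)%:Z.

Definition A1 : Prop :=
  forall l : 'I_L, (0 < l)%N -> z l != (k l).+1 ->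
    exists v, [&& earlier l v, ~~ black_before l v & odd (npaths v (phi l ord0))].

(* Fermions: an abstract complex algebra with c_{u,s}, c^dag_{u,s} obeying the CAR *)
Definition anticomm (A : nzRingType) (x y : A) : A := x * y + y * x.

Definition CAR (A : lalgType algC) (c cdag : V -> bool -> A) : Prop :=
  [/\ forall u w s t, anticomm (cdag u s) (c w t) = ((u == w) && (s == t))%:R,
      forall u w s t, anticomm (c u s) (c w t) = 0
    & forall u w s t, anticomm (cdag u s) (cdag w t) = 0].

Definition aop (A : lalgType algC) (c : V -> bool -> A) (v : V) (s : bool) : A :=
  \sum_(u | reach v u) ((coef v u)%:~R : algC) *: c u s.

Definition dconn (A : lalgType algC) (c cdag : V -> bool -> A) (s : bool) (v w : V) : bool :=
  [exists u : V, (anticomm (cdag u s) (aop c v s) != 0)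
                 && (anticomm (cdag u s) (aop c w s) != 0)].

End Graph.

(* Main.v *)
Require Import Defs.
From mathcomp Require Import all_boot all_order all_algebra all_field.
From mathcomp Require Import zify.
Local Open Scope ring_scope.
Import GRing.Theory Num.Theory.

Theorem mainTheorem6 (L : nat) (k : 'I_L -> nat) (V : finType)
    (phi : forall l : 'I_L, 'I_(k l).+2 -> V)
    (A : lalgType algC) (c cdag : V -> bool -> A) :
  construction phi -> A1 phi -> (1 : A) != 0 -> CAR c cdag ->
  forall (sigma : bool) (v v' : V), white phi v -> white phi v' ->
  exists s : seq V,
    [&& all (white phi) s, path (dconn phi c cdag sigma) v s & last v s == v'].
Proof.
move=> [phi_inj [cover hcon]] hA1 one_nz [car1 car2 car3] sigma v v' wv wv'.
set D := dconn phi c cdag sigma.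
have anti : forall u w, anticomm (cdag u sigma) (aop phi c w sigma)
    = if reach phi w u then 1 *~ coef phi w u else 0.
  move=> u w; rewrite /anticomm /aop mulr_sumr mulr_suml -big_split /=.
  rewrite (eq_bigr (fun x => ((u == x)%:R : A) *~ coef phi w x)); last first.
    by move=> x _; rewrite scaler_int mulrzAr mulrzAl -mulrzDl -[_ + _]/(anticomm _ _) car1 eqxx andbT.
  rewrite big_mkcond (bigD1 u) //= big1 ?addr0; last first.
    by move=> x /negbTE ux; rewrite eq_sym ux; case: ifP => //; rewrite mul0rz.
  by rewrite eqxx mulr1n.
have coef_odd : forall x u, odd (npaths phi x u) -> coef phi x u != 0.
  move=> x u odd_n; apply/negP => /eqP c0.
  have : (2 %| coef phi x u - (npaths phi x u)%:Z)%Z.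
    have -> : (npaths phi x u)%:Z = \sum_(j < #|V|) (npaths_len phi x u j)%:Z.
      by rewrite /npaths -[LHS]natz natr_sum; apply: eq_bigr => j _; rewrite natz.
    rewrite /coef -sumrB; apply: rpred_sum => j _.
    rewrite -signr_odd; case: (odd j); rewrite ?expr1 ?expr0 ?mul1r ?subrr ?dvdz0 //.
    by rewrite mulN1r -opprD rpredN -PoszD unfold_in /dvdz /= addnn -muln2; apply/dvdnP; exists (npaths_len phi x u j); rewrite /= mul1n muln2 addnn.
  by rewrite c0 sub0r rpredN unfold_in /dvdz /= dvdn2 odd_n.
have odd_dconn : forall x y u, odd (npaths phi x u) -> odd (npaths phi y u) -> D x y.
  move=> x y u ox oy; apply/existsP; exists u; rewrite !anti /reach !odd_gt0 //.
  rewrite -!(@scaler_int algC A) !scaler_eq0 !intr_eq0 !negb_or.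
  by rewrite coef_odd // coef_odd // one_nz.
have earlyP : forall (m n : 'I_L) i x, (m < n)%N -> phi m i = x -> earlier phi n x.
  move=> m n i x mn e; apply/existsP; exists m; rewrite mn; apply/existsP; exists i.
  by rewrite e.
have notearly0 : forall n : 'I_L, (0 < n)%N -> ~~ earlier phi n (phi n ord0).
  by move=> n /hcon [].
have bl_inj : forall m n : 'I_L, phi m ord0 = phi n ord0 -> m = n.
  move=> m n e; case: (ltngtP m n) => [mn|nm|/ord_inj //].
  - by move: (notearly0 n (leq_ltn_trans (leq0n _) mn)); rewrite (earlyP m n ord0 _ mn e).
  - by move: (notearly0 m (leq_ltn_trans (leq0n _) nm)); rewrite (earlyP n m ord0 _ nm (esym e)).
have F1 : forall (m : 'I_L) y, dedge phi (phi m ord0) y ->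
    exists n : 'I_L, y = phi n ord0 /\ (m < n)%N.
  move=> m y /existsP [n /existsP [i /and3P [i0 /eqP e1 /eqP e2]]].
  exists n; split => //.
  case: (ltngtP m n) => // [nm|/ord_inj mn].
  - by move: (notearly0 m (leq_ltn_trans (leq0n _) nm)); rewrite (earlyP n m i _ nm e1).
  - subst n; move/phi_inj: e1 => e1; by rewrite e1 eqxx in i0.
have F2 : forall (l : 'I_L) x y, ~~ earlier phi l x -> dedge phi x y ->
    exists n : 'I_L, y = phi n ord0 /\ (l <= n)%N.
  move=> l x y ne /existsP [n /existsP [i /and3P [i0 /eqP e1 /eqP e2]]].
  exists n; split => //; rewrite leqNgt; apply/negP => nl.
  by move: ne; rewrite (earlyP n l i x nl e1).
have P : forall s (m : 'I_L), path (dedge phi) (phi m ord0) s -> s != [::] ->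
    exists n : 'I_L, last (phi m ord0) s = phi n ord0 /\ (m < n)%N.
  elim=> [|y s IH] m //= /andP [e ps] _.
  have [n1 [ey mn1]] := F1 m y e; subst y.
  case: s IH ps => [|y2 s] IH ps; first by exists n1.
  have [n [hl n1n]] := IH n1 ps isT.
  by exists n; split; [exact: hl | exact: ltn_trans mn1 n1n].
have npaths_new : forall (l : 'I_L) (i : 'I_(k l).+2), i != ord0 ->
    ~~ earlier phi l (phi l i) -> npaths phi (phi l i) (phi l ord0) = 1%N.
  move=> l i i0 ne.
  have xb : phi l i != phi l ord0.
    by apply/eqP => /phi_inj e; rewrite e eqxx in i0.
  have hV : (1 < #|V|)%N.
    by apply: leq_trans (max_card [set phi l i; phi l ord0]); rewrite cards2 xb.
  rewrite /npaths (bigD1 (Ordinal hV)) //= big1 ?addn0.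
  - rewrite /npaths_len (_ : [set s | _] = [set [tuple phi l ord0]]) ?cards1 //.
    apply/setP => t; rewrite !inE.
    case: t => [[|y [|? ?]] //= Hs].
    rewrite andbT; apply/idP/idP.
    + by move=> /andP [_ /eqP ey]; apply/eqP/val_inj; rewrite /= ey.
    + move/eqP/(f_equal val) => /= [->]; rewrite eqxx andbT.
      by apply/existsP; exists l; apply/existsP; exists i; rewrite i0 !eqxx.
  - move=> [j hj] jne.
    have j1 : j != 1%N by move: jne; apply: contra => /eqP e; apply/eqP/val_inj.
    apply/eqP; rewrite cards_eq0; apply/eqP/setP => t; rewrite !inE.
    case: t => [s Hs] /=.
    case: s Hs => [|y [|y2 s]] Hs /=.
    + by rewrite (negbTE xb) ?andbF.
    + by move: j1; rewrite eq_sym Hs.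
    + apply/negP => /andP [/andP [exy p2] /eqP hl].
      have [n1 [ey ln1]] := F2 l _ y ne exy.
      subst y.
      have [n [hn n1n]] := P (y2 :: s) n1 p2 isT.
      have e : phi n ord0 = phi l ord0 by rewrite -hn; exact: hl.
      by move: n1n; rewrite (bl_inj _ _ e) ltnNge ln1.
have white_new : forall (l : 'I_L) i, i != ord0 -> ~~ earlier phi l (phi l i) ->
    white phi (phi l i).
  move=> l i i0 ne; rewrite /white; apply/negP => /existsP [m /eqP e].
  case: (ltngtP m l) => [ml|lm|/ord_inj ml].
  - by move: ne; rewrite (earlyP m l ord0 _ ml e).
  - by move: (notearly0 m (leq_ltn_trans (leq0n _) lm)); rewrite (earlyP l m i _ lm (esym e)).
  - subst m; move/phi_inj: e => e; by rewrite -e eqxx in i0.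
have white_old : forall (l : 'I_L) x, (0 < l)%N -> earlier phi l x ->
    ~~ black_before phi l x -> white phi x.
  move=> l x l0 /existsP [m /andP [ml /existsP [i /eqP ex]]] nb.
  rewrite /white; apply/negP => /existsP [n /eqP e].
  case: (ltngtP n l) => [nl|ln|/ord_inj nl].
  - by case/negP: nb; apply/existsP; exists n; rewrite nl e eqxx.
  - move: (notearly0 n (leq_ltn_trans (leq0n _) ln)).
    by rewrite e (earlyP m n i x (ltn_trans ml ln) ex).
  - subst n; move: (notearly0 l l0); by rewrite e (earlyP m l i x ml ex).
pose conn := fun x y => exists s : seq V, [&& all (white phi) s, path D x s & last x s == y].
have conn_trans : forall x y z, conn x y -> conn y z -> conn x z.
  move=> x y z [s1 /and3P [a1 p1 /eqP l1]] [s2 /and3P [a2 p2 l2]]; exists (s1 ++ s2).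
  by rewrite all_cat a1 a2 cat_path p1 l1 p2 last_cat l1 l2.
have conn_step : forall x y, white phi y -> D x y -> conn x y.
  by move=> x y wy dxy; exists [:: y]; rewrite /= wy dxy eqxx.
have D_sym : forall x y, D x y -> D y x.
  move=> x y /existsP [u /andP [h1 h2]]; apply/existsP; exists u; by rewrite h1 h2.
have hl0 : (0 < L)%N.
  by have [l _] := cover v; exact: leq_ltn_trans (leq0n _) (ltn_ord l).
have [l0 l0v] : exists l0 : 'I_L, nat_of_ord l0 = 0%N by exists (Ordinal hl0).
have i1 : (inord 1 : 'I_(k l0).+2) != ord0.
  by rewrite -(inj_eq val_inj) /= inordK.
have ne0 : ~~ earlier phi l0 (phi l0 (inord 1)).
  by apply/negP => /existsP [m /andP [hm _]]; move: hm; rewrite l0v ltn0.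
set r := phi l0 (inord 1).
have wr : white phi r := white_new l0 _ i1 ne0.
have np_r := npaths_new l0 _ i1 ne0.
have key : forall n (l : 'I_L), (l < n)%N -> forall x, white phi x -> in_layer phi l x ->
    conn x r /\ conn r x.
  elim=> [|n IH] l ln; first by rewrite ltn0 in ln.
  move=> x wx /existsP [i /eqP ex].
  case E: (earlier phi l x).
    move/existsP: E => [m /andP [ml inm]].
    exact: IH m (leq_trans ml ln) x wx inm.
  have i0 : i != ord0.
    apply/eqP => i0; move/negP: wx; apply; apply/existsP; exists l; by rewrite -ex i0.
  subst x.
  have ne : ~~ earlier phi l (phi l i) by rewrite E.
  have np := npaths_new l i i0 ne.
  case: (posnP l) => [l0e | lpos].
    have ell : l = l0 by apply: ord_inj; rewrite l0v.
    subst l.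
    have d : D (phi l0 i) r by apply: (odd_dconn _ _ (phi l0 ord0)); rewrite ?np ?np_r.
    by split; [exact: conn_step wr d | exact: conn_step wx (D_sym _ _ d)].
  have zne : z phi l != (k l).+1.
    have sub : [set j | earlier phi l (phi l j)] \subset ~: [set ord0; i].
      apply/subsetP => j; rewrite !inE => ej; apply/negP => /orP [/eqP e|/eqP e].
      - by move: ej; rewrite e (negbTE (notearly0 l lpos)).
      - by move: ej; rewrite e (negbTE ne).
    have := subset_leq_card sub; rewrite /z.
    have := cardsC [set ord0; i]; rewrite cards2 eq_sym i0 card_ord => hc h.
    by apply/eqP => e; rewrite e in h; lia.
  have [w /and3P [ew nbw ow]] := hA1 l lpos zne.
  have ww := white_old l w lpos ew nbw.
  move/existsP: ew => [m /andP [ml inm]].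
  have [IH1 IH2] := IH m (leq_trans ml ln) w ww inm.
  have d : D (phi l i) w by apply: (odd_dconn _ _ (phi l ord0)); rewrite ?np.
  split.
    exact: conn_trans (conn_step _ _ ww d) IH1.
  exact: conn_trans IH2 (conn_step _ _ wx (D_sym _ _ d)).
have [l1 inl1] := cover v; have [h1 _] := key l1.+1 l1 (ltnSn _) v wv inl1.
have [l2 inl2] := cover v'; have [_ h2] := key l2.+1 l2 (ltnSn _) v' wv' inl2.
exact: conn_trans h1 h2.
Qed.
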